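(* Let $n$ be a nonzero integer and let $\{a,b,c,d\}$ be a set of positive integers with the property $D(n)$ such that $|n|^3\le a<b<c<d$. Then \[ d>\frac{3.847\,bc}{n^2}. \]
   Context: A set of positive integers $S$ has the property $D(n)$ if $xy+n$ is a perfect square for all distinct $x,y\in S$. *)

(* Defs.v *)
From Stdlib Require Import ZArith.
Open Scope Z_scope.

Definition is_square (z : Z) : Prop := exists k : Z, z = k * k.

Definition has_property_D (n : Z) (S : Z -> Prop) : Prop :=
  (forall x, S x -> 0 < x) /\
  (forall x y, S x -> S y -> x <> y -> is_square (x * y + n)).

(* Main.v *)
Require Import Defs.
From Stdlib Require Import ZArith Lia Psatz.
Open Scope Z_scope.

Lemma sq_abs z : is_square z -> exists k, 0 <= k /\ z = k * k.
Proof. intros [k Hk]. exists (Z.abs k). split; [lia|]. rewrite Hk. destruct (Z.abs_spec k) as [[_ ->]|[_ ->]]; ring. Qed.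

Lemma pos4 m t : 0 <= m -> 0 <= 4*m*m*(t*t).
Proof. intros. apply Z.mul_nonneg_nonneg; [|apply Z.square_nonneg]. apply Z.mul_nonneg_nonneg; lia. Qed.
Lemma pos2 m b : 0 <= m*m*(b*b).
Proof. apply Z.mul_nonneg_nonneg; apply Z.square_nonneg. Qed.
Ltac pos := first [apply pos4; lia | apply pos2].

Lemma sqrt_mono X Y : 0 <= X -> Y*Y <= X*X -> Y <= X.
Proof. intros. nia. Qed.

Lemma triple_id (n p q r w1 w2 w3 : Z) :
  w1*w1 = p*q+n -> w2*w2 = p*r+n -> w3*w3 = q*r+n ->
  let e := n*(p+q+r) + 2*p*q*r - 2*w1*w2*w3 in
  r*e + n*n = (r*w1 - w2*w3)*(r*w1 - w2*w3) /\
  e*(e+4*w1*w2*w3) = n*n*((r-p-q)*(r-p-q) - 4*(w1*w1)).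
Proof.
  intros H1 H2 H3 e. subst e. split.
  - transitivity (r*(n*(p+q+r) + 2*p*q*r) + n*n - 2*r*w1*w2*w3); [ring|].
    transitivity (r*r*(w1*w1) - 2*r*w1*w2*w3 + (w2*w2)*(w3*w3)); [|ring].
    rewrite H1, H2, H3; ring.
  - transitivity ((n*(p+q+r) + 2*p*q*r)*(n*(p+q+r) + 2*p*q*r) - 4*(w1*w1)*(w2*w2)*(w3*w3)); [ring|].
    rewrite H1, H2, H3 ; ring.
Qed.

Lemma e_nonneg n r e w : n*n < r -> r*e + n*n = w*w -> 0 <= e.
Proof. intros. nia. Qed.


Lemma case_pos n m b c d t y z :
  1 <= m -> 0 <= n -> 0 < b -> b < c -> c < d -> 0 <= t -> 0 <= y -> 0 <= z ->
  t*t = b*c+n -> y*y = b*d+n -> z*z = c*d+n ->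
  4*t*y*z + 1 + 4*m*m*(t*t) <= m*m*((d-b-c)*(d-b-c)) ->
  4*b*c < m*m*d.
Proof.
  intros Hm Hn Hb Hbc Hcd Ht0 Hy0 Hz0 Ht Hy Hz H.
  assert (T : b*c*d <= t*y*z).
  { apply sqrt_mono. apply Z.mul_nonneg_nonneg; [apply Z.mul_nonneg_nonneg|]; lia.
    replace (t*y*z*(t*y*z)) with ((t*t)*((y*y)*(z*z))) by ring.
    replace (b*c*d*(b*c*d)) with ((b*c)*((b*d)*(c*d))) by ring.
    rewrite Ht, Hy, Hz.
    assert (0 <= b*d*(c*d)) by (apply Z.mul_nonneg_nonneg; apply Z.mul_nonneg_nonneg; lia).
    assert (b*d*(c*d) <= (b*d+n)*(c*d+n)) by (apply Z.mul_le_mono_nonneg; nia).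
    apply Z.mul_le_mono_nonneg; nia. }
  assert (D : (d-b-c)*(d-b-c) <= d*d) by nia.
  assert (4*b*c*d < m*m*d*d).
  { assert (A1 : m*m*((d-b-c)*(d-b-c)) <= m*m*(d*d)) by (apply Z.mul_le_mono_nonneg_l; nia).
    assert (A2 : 0 <= 4*m*m*(t*t)) by pos. clear -A1 A2 T H. lia. }
  assert (HH : (4*b*c)*d < (m*m*d)*d) by (clear -H0; lia).
  apply Z.mul_lt_mono_pos_r in HH; lia.
Qed.

Lemma case_neg m b c d t y z :
  1 <= m -> m*m*m < b -> b < c -> c < d -> 0 <= t -> 0 <= y -> 0 <= z ->
  t*t = b*c-m -> y*y = b*d-m -> z*z = c*d-m ->
  4*t*y*z + 1 + 4*m*m*(t*t) <= m*m*((d-b-c)*(d-b-c)) ->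
  4*b*c < m*m*d.
Proof.
  intros Hm Hb Hbc Hcd Ht0 Hy0 Hz0 Ht Hy Hz H.
  assert (Hmb : m*m < b) by (clear -Hm Hb; nia).
  assert (Hb0 : 0 < b) by (clear -Hm Hb Hmb; nia).
  destruct (Z_lt_le_dec d (b+c)) as [Hd|Hd].
  - exfalso.
    assert (T : m*m <= t).
    { apply sqrt_mono; [lia|]. rewrite Ht. clear -Hm Hb Hbc Hmb.
      assert (m*m*(m*m) <= m*m*b) by (apply Z.mul_le_mono_nonneg_l; nia).
      assert (m*m*b + m <= b*c) by nia. nia. }
    assert (Y : b*b <= y*z).
    { apply sqrt_mono; [apply Z.mul_nonneg_nonneg; lia|].
      replace (y*z*(y*z)) with ((y*y)*(z*z)) by ring. rewrite Hy, Hz.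
      replace (b*b*(b*b)) with ((b*b)*(b*b)) by ring.
      assert (b*b <= b*d - m) by (clear -Hm Hmb Hbc Hcd Hb0; nia).
      assert (b*b <= c*d - m) by (clear -Hm Hmb Hbc Hcd Hb0; nia).
      apply Z.mul_le_mono_nonneg; try apply Z.square_nonneg; lia. }
    assert (D : (d-b-c)*(d-b-c) < b*b) by (clear -Hd Hbc Hcd Hb0; nia).
    assert (A1 : m*m*((d-b-c)*(d-b-c)) <= m*m*(b*b)) by (apply Z.mul_le_mono_nonneg_l; [apply Z.square_nonneg|lia]).
    assert (A2 : 4*(m*m)*(b*b) <= 4*t*(y*z)).
    { apply Z.mul_le_mono_nonneg; [|lia|apply Z.square_nonneg|lia].
      apply Z.mul_nonneg_nonneg; [lia|apply Z.square_nonneg]. }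
    assert (A3 : 0 <= 4*m*m*(t*t)) by pos. assert (A4 : 0 <= m*m*(b*b)) by pos.
    clear -H A1 A2 A3 A4. lia.
  - assert (Y : t*d <= y*z).
    { apply sqrt_mono; [apply Z.mul_nonneg_nonneg; lia|].
      replace (y*z*(y*z)) with ((y*y)*(z*z)) by ring. rewrite Hy, Hz.
      replace (t*d*(t*d)) with ((t*t)*(d*d)) by ring. rewrite Ht.
      assert (E : (b*d-m)*(c*d-m) - (b*c-m)*(d*d) = m*d*(d-b-c) + m*m) by ring.
      assert (0 <= m*d*(d-b-c)) by (apply Z.mul_nonneg_nonneg; [apply Z.mul_nonneg_nonneg|]; lia).
      assert (0 <= m*m) by apply Z.square_nonneg.
      clear -E H0 H1. lia. }
    assert (H2 : 4*(t*t)*d < m*m*((d-b-c)*(d-b-c))).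
    { assert (A1 : t*(t*d) <= t*(y*z)) by (apply Z.mul_le_mono_nonneg_l; lia).
      assert (A2 : 0 <= 4*m*m*(t*t)) by pos. clear -A1 A2 H. lia. }
    rewrite Ht in H2.
    set (N := m*m) in *.
    assert (HN1 : m <= N) by (unfold N; clear -Hm; nia).
    assert (HNb : N < b) by (unfold N; lia).
    clearbody N.
    set (L := 4*(b*c-m) + 2*N*(b+c)) in *.
    assert (H3 : L*d - N*d*d < N*((b+c)*(b+c))).
    { unfold L. clear -H2. assert (E: N*((d-b-c)*(d-b-c)) = N*d*d - 2*N*(b+c)*d + N*((b+c)*(b+c))) by ring.
      lia. }
    destruct (Z_lt_le_dec (L - N*c) (N*d)) as [H4|H4].
    + unfold L in H4. assert (4*m <= 2*N*b + N*c) by (clear -HN1 Hm Hmb Hbc; nia). lia.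
    + exfalso.
      assert (A1 : 0 <= (N*d - N*c)*(L - N*c - N*d)).
      { apply Z.mul_nonneg_nonneg; [|lia]. assert (N*c <= N*d) by (apply Z.mul_le_mono_nonneg_l; lia). lia. }
      assert (E : (N*d - N*c)*(L - N*c - N*d) = N*(L*d - N*d*d) - N*c*(L - N*c)) by ring.
      assert (A2 : c*(L - N*c) < N*((b+c)*(b+c))).
      { assert (N*(c*(L - N*c)) < N*(N*((b+c)*(b+c)))).
        { assert (N*(L*d - N*d*d) < N*(N*((b+c)*(b+c)))) by (apply Z.mul_lt_mono_pos_l; lia).
          assert (N*c*(L-N*c) = N*(c*(L-N*c))) by ring. lia. }
        apply Z.mul_lt_mono_pos_l in H0; lia. }
      unfold L in A2. clear -A2 Hm HN1 HNb Hbc Hb0.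
      assert (E2 : c*(4*(b*c-m) + 2*N*(b+c) - N*c) - N*((b+c)*(b+c)) = 4*b*c*c - 4*m*c - N*b*b) by ring.
      assert (N*b <= c*c) by (assert (N*b <= c*b) by (apply Z.mul_le_mono_nonneg_r; lia); nia).
      assert (2*b*c*c >= N*b*b) by nia.
      assert (2*m <= b*c) by nia.
      assert (2*b*c*c >= 4*m*c) by nia.
      lia.
Qed.

Lemma sq_split X T : X*X = 4*(T*T) -> X = 2*T \/ X = -2*T.
Proof. intros H. assert ((X-2*T)*(X+2*T) = 0) by nia.
  apply Z.mul_eq_0 in H0. lia. Qed.

Lemma case_zero n m a b c d t s x z :
  1 <= m -> -m <= n <= m -> n*n = m*m -> m*m*m <= a -> 0 < a -> a < b -> b < c -> c < d ->
  0 <= t -> 0 <= s -> 0 <= x -> 0 <= z ->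
  t*t = b*c+n -> s*s = a*c+n -> x*x = a*d+n -> z*z = c*d+n ->
  (d-b-c)*(d-b-c) = 4*(t*t) -> False.
Proof.
  intros Hm Hnm HN Ham Ha Hab Hbc Hcd Ht0 Hs0 Hx0 Hz0 Ht Hs Hx Hz H.
  assert (Hmm : m*m <= m*m*m) by (clear -Hm; nia).
  assert (Hma : m <= a) by (clear -Hm Hmm Ham; nia).
  destruct (sq_split _ _ H) as [Hd|Hd].
  2:{ assert (A1 : b*b > 4*(t*t)) by (clear -Hd Hcd Ht0 Ha Hab; nia). rewrite Ht in A1.
      clear -A1 Hab Hbc Hma Hnm Ha. nia. }
  assert (Htc : t < c).
  { destruct (Z_lt_le_dec t c); auto. exfalso. assert (c*c <= t*t) by (clear -l Ha Hab Hbc; nia).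
    rewrite Ht in H0. clear -H0 Hbc Hnm Hma Ha Hab. nia. }
  destruct (triple_id n a c d s x z Hs Hx Hz) as [E1 E2].
  set (e := n*(a+c+d) + 2*a*c*d - 2*s*x*z) in *.
  rewrite HN in E1; rewrite HN in E2.
  assert (He : 0 <= e) by (eapply e_nonneg; [|exact E1]; lia).
  clearbody e.
  destruct (Z.eq_dec e 0) as [He0|He1].
  - rewrite He0 in E2.
    assert (E3 : (d-a-c)*(d-a-c) = 4*(s*s)).
    { assert (m*m <> 0) by (clear -Hm; nia).
      assert (m*m*((d-a-c)*(d-a-c) - 4*(s*s)) = 0) by (clear -E2; lia).
      apply Z.mul_eq_0 in H1. lia. }
    destruct (sq_split _ _ E3) as [Hd3|Hd3].
    + assert (s < t).
      { destruct (Z_lt_le_dec s t); auto. exfalso. assert (t*t <= s*s) by (clear -l Ht0; nia).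
        rewrite Ht, Hs in H0. clear -H0 Hab Hbc Ha. nia. }
      lia.
    + assert (A1 : a*a > 4*(s*s)) by (clear -Hd3 Hcd Hs0 Ha Hab Hbc; nia). rewrite Hs in A1.
      clear -A1 Hab Hbc Hma Hnm Ha. nia.
  - assert (P0 : 0 <= s*x*z) by (apply Z.mul_nonneg_nonneg; [apply Z.mul_nonneg_nonneg|]; lia).
    assert (Hst : e + 4*s*x*z <= m*m*((d-a-c)*(d-a-c) - 4*(s*s))).
    { rewrite <- E2. clear -He He1 P0. assert (1 <= e) by lia. nia. }
    set (u := b + 2*t) in *.
    assert (Hdu : d = c + u) by lia.
    assert (Hu : u <= 3*c) by lia.
    assert (Hua : a < u) by lia.
    clearbody u. subst d.
    assert (K : (a*c - m)*(a*(c+u) - m) <= a*(s*x*z)).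
    { apply sqrt_mono. { apply Z.mul_nonneg_nonneg; lia. }
      replace (a*(s*x*z)*(a*(s*x*z))) with (a*a*((s*s)*((x*x)*(z*z)))) by ring.
      rewrite Hs, Hx, Hz.
      assert (P1 : 0 < a*c - m) by (clear -Hma Hab Hbc Ha; nia).
      assert (P2 : 0 < a*(c+u) - m) by (clear -Hma Hab Hbc Ha Hua; nia).
      assert (Q1 : a*c - m <= a*c+n) by lia.
      assert (Q2 : a*(c+u) - m <= a*(c+u)+n) by lia.
      assert (Q3 : c*(c+u) - m <= c*(c+u)+n) by lia.
      assert (R : (a*c-m)*(a*(c+u)-m) <= a*a*(c*(c+u)-m)).
      { assert (E : a*a*(c*(c+u)-m) - (a*c-m)*(a*(c+u)-m) = a*m*(c - a) + m*(a*(c+u) - m)) by ring.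
        assert (0 <= a*m*(c-a)) by (apply Z.mul_nonneg_nonneg; [apply Z.mul_nonneg_nonneg|]; lia).
        assert (0 <= m*(a*(c+u) - m)) by (apply Z.mul_nonneg_nonneg; lia).
        lia. }
      assert (S1 : (a*c-m)*(a*(c+u)-m) <= (a*c+n)*(a*(c+u)+n)) by (apply Z.mul_le_mono_nonneg; lia).
      assert (S2 : a*a*(c*(c+u)-m) <= a*a*(c*(c+u)+n)) by (apply Z.mul_le_mono_nonneg_l; [apply Z.square_nonneg|lia]).
      replace ((a*c-m)*(a*(c+u)-m)*((a*c-m)*(a*(c+u)-m))) with (((a*c-m)*(a*(c+u)-m))*((a*c-m)*(a*(c+u)-m))) by ring.
      replace (a*a*((a*c+n)*((a*(c+u)+n)*(c*(c+u)+n)))) with (((a*c+n)*(a*(c+u)+n))*(a*a*(c*(c+u)+n))) by ring.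
      apply Z.mul_le_mono_nonneg; [apply Z.mul_nonneg_nonneg; lia | exact S1 | apply Z.mul_nonneg_nonneg; lia | lia]. }
    assert (F1 : a*(c-1) <= a*c - m) by (clear -Hma; nia).
    assert (F2 : a*(c+u-1) <= a*(c+u) - m) by (clear -Hma; nia).
    assert (F3 : u*u <= 4*((c-1)*(c+u-1))).
    { assert (u*u <= 3*c*u) by (clear -Hu Hua Ha; nia).
      assert (E : 4*((c-1)*(c+u-1)) - 3*c*u = 4*((c-1)*(c-1)) + (c-4)*u) by ring.
      assert (3 <= c) by lia.
      destruct (Z_lt_le_dec c 4).
      - assert (c = 3) by lia. subst c. lia.
      - assert (0 <= (c-4)*u) by (apply Z.mul_nonneg_nonneg; lia).
        assert (0 <= (c-1)*(c-1)) by apply Z.square_nonneg. lia. }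
    assert (F4 : a*a*(u*u) <= 4*((a*c-m)*(a*(c+u)-m))).
    { assert (a*(c-1)*(a*(c+u-1)) <= (a*c-m)*(a*(c+u)-m)) by (apply Z.mul_le_mono_nonneg; [apply Z.mul_nonneg_nonneg; lia | exact F1 | apply Z.mul_nonneg_nonneg; lia | exact F2]).
      assert (a*a*(u*u) <= a*a*(4*((c-1)*(c+u-1)))) by (apply Z.mul_le_mono_nonneg_l; [apply Z.square_nonneg|lia]).
      assert (E : a*(c-1)*(a*(c+u-1)) = a*a*((c-1)*(c+u-1))) by ring.
      lia. }
    assert (F5 : m*m*(u*u) <= 4*(s*x*z)).
    { assert (Hmma : m*m <= a) by lia.
      assert (a*(m*m*(u*u)) <= a*(4*(s*x*z))).
      { assert (a*(m*m*(u*u)) <= a*(a*(u*u))) by (apply Z.mul_le_mono_nonneg_l; [lia|]; apply Z.mul_le_mono_nonneg_r; [apply Z.square_nonneg|lia]).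
        assert (E : a*(a*(u*u)) = a*a*(u*u)) by ring.
        assert (E' : a*(4*(s*x*z)) = 4*(a*(s*x*z))) by ring.
        lia. }
      apply Z.mul_le_mono_pos_l in H0; lia. }
    assert (F6 : (c+u-a-c)*(c+u-a-c) <= u*u) by (clear -Hua Ha; nia).
    assert (A1 : m*m*((c+u-a-c)*(c+u-a-c)) <= m*m*(u*u)) by (apply Z.mul_le_mono_nonneg_l; [apply Z.square_nonneg|lia]).
    assert (A2 : 0 <= 4*m*m*(s*s)) by pos.
    assert (E : m*m*((c+u-a-c)*(c+u-a-c) - 4*(s*s)) = m*m*((c+u-a-c)*(c+u-a-c)) - 4*m*m*(s*s)) by ring.
    clear -Hst A1 A2 E F5 He1 He. lia.
Qed.

Theorem lemma4 (n a b c d : Z) :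
  n <> 0 ->
  has_property_D n (fun x => x = a \/ x = b \/ x = c \/ x = d) ->
  Z.abs n ^ 3 <= a -> a < b -> b < c -> c < d ->
  3847 * b * c < 1000 * n ^ 2 * d.
Proof.
  intros Hn [Hpos Hsq] Ha Hab Hbc Hcd.
  assert (Ha0 : 0 < a) by (apply Hpos; auto).
  set (m := Z.abs n) in *.
  assert (Hm : 1 <= m) by lia.
  assert (HN : n*n = m*m) by (unfold m; destruct (Z.abs_spec n) as [[_ ->]|[_ ->]]; ring).
  assert (Hnm : -m <= n <= m) by lia.
  assert (Ham : m*m*m <= a) by (replace (m*m*m) with (m^3) by ring; exact Ha) .
  assert (Hmm : m*m <= m*m*m) by (clear -Hm; nia).
  destruct (sq_abs _ (Hsq b c ltac:(auto) ltac:(auto) ltac:(lia))) as [t [Ht0 Ht]].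
  destruct (sq_abs _ (Hsq b d ltac:(auto) ltac:(auto) ltac:(lia))) as [y [Hy0 Hy]].
  destruct (sq_abs _ (Hsq c d ltac:(auto) ltac:(auto) ltac:(lia))) as [z [Hz0 Hz]].
  destruct (sq_abs _ (Hsq a c ltac:(auto) ltac:(auto) ltac:(lia))) as [s [Hs0 Hs]].
  destruct (sq_abs _ (Hsq a d ltac:(auto) ltac:(auto) ltac:(lia))) as [x [Hx0 Hx]].
  clear Hsq Hpos Ha.
  assert (Hnd : n*n < d) by lia.
  assert (Nd : 4*b*c < n*n*d).
  2:{ rewrite Z.pow_2_r. clear -Nd Hab Hbc Ha0. assert (0 < b*c) by nia. lia. }
  rewrite HN in Hnd |- *.
  destruct (triple_id n b c d t y z (eq_sym Ht) (eq_sym Hy) (eq_sym Hz)) as [E1 E2].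
  set (e := n*(b+c+d) + 2*b*c*d - 2*t*y*z) in *.
  rewrite HN in E1; rewrite HN in E2.
  assert (He : 0 <= e) by (eapply e_nonneg; [|exact E1]; exact Hnd).
  destruct (Z.eq_dec e 0) as [He0|He1].
  - exfalso. rewrite He0 in E2.
    assert (E3 : (d-b-c)*(d-b-c) = 4*(t*t)).
    { assert (m*m <> 0) by (clear -Hm; nia).
      assert (m*m*((d-b-c)*(d-b-c) - 4*(t*t)) = 0) by (clear -E2; lia).
      apply Z.mul_eq_0 in H0. lia. }
    exact (case_zero n m a b c d t s x z Hm Hnm HN Ham Ha0 Hab Hbc Hcd Ht0 Hs0 Hx0 Hz0
             (eq_sym Ht) (eq_sym Hs) (eq_sym Hx) (eq_sym Hz) E3).
  - assert (Hst : e + 4*t*y*z <= m*m*((d-b-c)*(d-b-c) - 4*(t*t))).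
    { assert (0 <= t*y*z) by (apply Z.mul_nonneg_nonneg; [apply Z.mul_nonneg_nonneg|]; lia).
      rewrite <- E2. clear -He He1 H. assert (1 <= e) by lia. nia. }
    assert (Hmain : 4*t*y*z + 1 + 4*m*m*(t*t) <= m*m*((d-b-c)*(d-b-c))).
    { assert (m*m*((d-b-c)*(d-b-c) - 4*(t*t)) = m*m*((d-b-c)*(d-b-c)) - 4*m*m*(t*t)) by ring.
      clear -H Hst He1 He. lia. }
    assert (Hmb : m*m*m < b) by lia.
    destruct (Z_lt_le_dec n 0) as [Hneg|Hnn].
    + assert (En : n = -m) by lia. rewrite En in Ht, Hy, Hz.
      apply (case_neg m b c d t y z); try assumption; try lia.
    + apply (case_pos n m b c d t y z); try assumption; try lia.
Qed.
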